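(* Let $k\ge 2$, $t\ge 0$, and consider a $t$-layer $k$-IGN whose activation functions belong to a collection $\Omega$. Then for every $j\in[d_t]$ there is an expression $\varphi_j\in\mathsf{TL}_k^{(tk)}(\Omega)$ with free variables among $x_1,\dots,x_k$ such that for every graph $G$ and every $\mathbf v\in V_G^k$, $[\![\varphi_j]\!]^{\mathbf v}_G=\mathbf F^{(t)}_{\mathbf v,j}$, where $\mathbf F^{(t)}$ is the tensor computed by the IGN on $G$.
   Context: Fix integers $n\ge 1$ and $\ell\ge 1$. A graph is a triple $G=(V_G,E_G,\mathrm{col}_G)$ with $V_G=[n]$, $E_G$ a set of unordered pairs of distinct vertices, and $\mathrm{col}_G:V_G\to\mathbb R^\ell$. Tensor language $\mathsf{TL}(\Omega)$: $\Omega$ is a collection of functions $f:\mathbb R^p\to\mathbb R$ ($p\ge1$ depending on $f$). Expressions: $\varphi::=\mathbf 1_{x=y}\mid \mathbf 1_{x\neq y}\mid E(x,y)\mid P_s(x)\mid \varphi\cdot\varphi\mid \varphi+\varphi\mid a\cdot\varphi\mid f(\varphi_1,\dots,\varphi_p)\mid \sum_x\varphi$ ($s\in[\ell]$, $a\in\mathbb R$, $f\in\Omega$), with the usual free variables ($\sum_x$ binds $x$). Semantics for a graph $G$ and valuation $\nu$ into $V_G$: $[\![E(x,y)]\!]^\nu_G=1$ if $\nu(x)\nu(y)\in E_G$ else $0$; $[\![P_s(x)]\!]^\nu_G=\mathrm{col}_G(\nu(x))_s$; $[\![\mathbf 1_{x\,\mathrm{op}\,y}]\!]^\nu_G=1$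 if $\nu(x)\,\mathrm{op}\,\nu(y)$ else $0$; $\cdot,+,a\cdot,f$ act on values; $[\![\sum_x\varphi]\!]^\nu_G=\sum_{v\in V_G}[\![\varphi]\!]^{\nu[x\mapsto v]}_G$. $[\![\varphi]\!]^{\mathbf v}_G$ denotes the value under $x_i\mapsto v_i$. Summation depth: $0$ for atoms, max over components for $\cdot,+,f(\dots)$, unchanged by $a\cdot$, $+1$ for $\sum_x$. $\mathsf{TL}_k^{(t)}(\Omega)$: expressions using only variables $x_1,\dots,x_k$ (re-binding allowed) of summation depth at most $t$. $k$-IGN. For $\mathbf v\in V_G^k$, $\mathsf{atp}_k(G,\mathbf v)\in\mathbb R^{d_0}$, $d_0=2\binom k2+k\ell$, lists for $1\le i<j\le k$ the indicators of $v_i=v_j$ and of $v_iv_j\in E_G$, and $\mathrm{col}_G(v_i)$ for $i\in[k]$. For $m\ge1$, $\sim_m$ is the equivalence on $[n]^m$ with $\mathbf a\sim_m\mathbf b$ iff for all $i,j\in[m]$: $a_i=a_j\Leftrightarrow b_i=b_j$; $[n]^m/{\sim_m}$ its classes. A $t$-layer $k$-IGN is given by dimensions $d_0,d_1,\dots,d_t$, real constants $c^{(r)}_{\gamma,i,j}$ ($\gamma\in[n]^{2k}/{\sim_{2k}}$, $i\in[d_{r-1}]$, $j\in[d_r]$), $b^{(r)}_{\mu,j}$ ($\mu\in[n]^k/{\sim_k}$) and activations $\sigma_r:\mathbb R\to\mathbb R$ for $r\in[t]$. On a graph $G$ it computes $\mathbf F^{(0)}\in\mathbb R^{n^k\times d_0}$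 with $\mathbf F^{(0)}_{\mathbf v,:}=\mathsf{atp}_k(G,\mathbf v)$, and for $r\in[t]$, $j\in[d_r]$, $\mathbf v\in[n]^k$: $$\mathbf F^{(r)}_{\mathbf v,j}=\sigma_r\Bigl(\sum_{\gamma\in[n]^{2k}/\sim_{2k}}\ \sum_{\mathbf w\in[n]^k}\mathbf 1_{(\mathbf v,\mathbf w)\in\gamma}\sum_{i\in[d_{r-1}]}c^{(r)}_{\gamma,i,j}\,\mathbf F^{(r-1)}_{\mathbf w,i}+\sum_{\mu\in[n]^k/\sim_k}\mathbf 1_{\mathbf v\in\mu}\,b^{(r)}_{\mu,j}\Bigr).$$ *)

(* Defs.v *)
From HB Require Import structures.
From mathcomp Require Import all_boot all_order all_algebra.
From mathcomp Require Import reals.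
Set Implicit Arguments. Unset Strict Implicit. Unset Printing Implicit Defensive.
Import Order.TTheory GRing.Theory Num.Theory.
Local Open Scope ring_scope.

Section Defs.
Variable R : realType.

Record graph (n l : nat) := Graph {
  gE : rel 'I_n;
  gE_sym : symmetric gE;
  gE_irr : irreflexive gE;
  gcol : 'I_n -> 'I_l -> R
}.

(* Variables are natural numbers; x_1,...,x_k are the variables 0,...,k-1.
   A function f : R^p -> R is represented as ('I_p -> R) -> R. *)
Inductive tl (l : nat) : Type :=
| TEq  : nat -> nat -> tl l
| TNeq : nat -> nat -> tl l
| TE   : nat -> nat -> tl l
| TP   : 'I_l -> nat -> tl l
| TMul : tl l -> tl l -> tl l
| TAdd : tl l -> tl l -> tl l
| TScale : R -> tl l -> tl l
| TFun : forall p : nat, (('I_p -> R) -> R) -> ('I_p -> tl l) -> tl l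
| TSum : nat -> tl l -> tl l.

Definition upd (n : nat) (nu : nat -> 'I_n) (x : nat) (w : 'I_n) : nat -> 'I_n :=
  fun y => if y == x then w else nu y.

Fixpoint tl_eval (n l : nat) (G : graph n l) (e : tl l) (nu : nat -> 'I_n) : R :=
  match e with
  | TEq x y => ((nu x == nu y) : nat)%:R
  | TNeq x y => ((nu x != nu y) : nat)%:R
  | TE x y => ((gE G (nu x) (nu y)) : nat)%:R
  | TP s x => gcol G (nu x) s
  | TMul a b => tl_eval G a nu * tl_eval G b nu
  | TAdd a b => tl_eval G a nu + tl_eval G b nu
  | TScale a b => a * tl_eval G b nu
  | TFun p f args => f (fun i => tl_eval G (args i) nu)
  | TSum x b => \sum_(w : 'I_n) tl_eval G b (upd nu x w)
  end.

Fixpoint sdepth (l : nat) (e : tl l) : nat :=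
  match e with
  | TEq _ _ | TNeq _ _ | TE _ _ | TP _ _ => 0
  | TMul a b | TAdd a b => maxn (sdepth a) (sdepth b)
  | TScale _ b => sdepth b
  | TFun p _ args => \max_(i < p) sdepth (args i)
  | TSum _ b => (sdepth b).+1
  end%N.

Fixpoint in_TL_k (l : nat) (Omega : forall p : nat, (('I_p -> R) -> R) -> Prop)
    (k : nat) (e : tl l) : Prop :=
  match e with
  | TEq x y | TNeq x y | TE x y => (x < k)%N /\ (y < k)%N
  | TP _ x => (x < k)%N
  | TMul a b | TAdd a b => in_TL_k Omega k a /\ in_TL_k Omega k b
  | TScale _ b => in_TL_k Omega k b
  | TFun p f args => (0 < p)%N /\ Omega p f /\ forall i, in_TL_k Omega k (args i)
  | TSum x b => (x < k)%N /\ in_TL_k Omega k b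
  end.

Definition TL (l : nat) (Omega : forall p : nat, (('I_p -> R) -> R) -> Prop)
    (k t : nat) (e : tl l) : Prop :=
  in_TL_k Omega k e /\ (sdepth e <= t)%N.

Notation tup n m := {ffun 'I_m -> 'I_n}.

Definition simm (n m : nat) (a b : tup n m) : bool :=
  [forall i, forall j, (a i == a j) == (b i == b j)].

Definition eq_classes (n m : nat) : {set {set tup n m}} :=
  [set [set b | simm a b] | a : tup n m].

Definition catv (n k : nat) (v w : tup n k) : tup n (k + k) :=
  [ffun i => match split i with inl a => v a | inr b => w b end].

Definition d0 (k l : nat) : nat := (2 * 'C(k, 2) + k * l)%N.

Definition atp_seq (n l k : nat) (G : graph n l) (v : tup n k) : seq R :=
  flatten [seq [:: ((v p.1 == v p.2) : nat)%:R; ((gE G (v p.1) (v p.2)) : nat)%:R]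
          | p : 'I_k * 'I_k <- [seq q : 'I_k * 'I_k <- [seq (i, j) | i <- enum 'I_k, j <- enum 'I_k] | (q.1 < q.2)%N]]
  ++ flatten [seq [seq gcol G (v i) s | s <- enum 'I_l] | i <- enum 'I_k].

Definition atp (n l k : nat) (G : graph n l) (v : tup n k) (i : 'I_(d0 k l)) : R :=
  nth 0 (atp_seq G v) i.

Definition dimf (k l : nat) (d : nat -> nat) (r : nat) : nat :=
  match r with 0 => d0 k l | _ => d r end.

Fixpoint ign_F (n l k : nat) (d : nat -> nat)
    (c : forall r : nat, {set tup n (k + k)} -> 'I_(dimf k l d r.-1) -> 'I_(dimf k l d r) -> R)
    (b : forall r : nat, {set tup n k} -> 'I_(dimf k l d r) -> R)
    (sigma : nat -> R -> R) (G : graph n l) (r : nat)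
    : tup n k -> 'I_(dimf k l d r) -> R :=
  match r return tup n k -> 'I_(dimf k l d r) -> R with
  | 0 => fun v i => atp G v i
  | r'.+1 => fun v j =>
      sigma r'.+1
        (\sum_(gam in eq_classes n (k + k)) \sum_(w : tup n k)
            ((catv v w \in gam) : nat)%:R *
            \sum_(i < dimf k l d r') c r'.+1 gam i j * @ign_F n l k d c b sigma G r' w i
         + \sum_(mu in eq_classes n k) ((v \in mu) : nat)%:R * b r'.+1 mu j)
  end.

End Defs.

Arguments ign_F {R n l k d} c b sigma G r _ _.

(* Main.v *)
Require Import Defs.
From HB Require Import structures.
From mathcomp Require Import all_boot all_order all_algebra.
From mathcomp Require Import reals.
From Stdlib Require Import FunctionalExtensionality.
Set Implicit Arguments. Unset Strict Implicit. Unset Printing Implicit Defensive.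
Import Order.TTheory GRing.Theory Num.Theory.
Local Open Scope ring_scope.

Section Dev.
Variable R : realType.
Variables (n l k : nat).
Variable Omega : forall p : nat, (('I_p -> R) -> R) -> Prop.
Hypothesis Hk : (0 < k)%N.

Lemma ev_sum (G : graph R n l) x b nu : tl_eval G (TSum x b) nu = \sum_(w : 'I_n) tl_eval G b (upd nu x w).
Proof. by []. Qed.
Lemma ev_mul (G : graph R n l) a b nu : tl_eval G (TMul a b) nu = tl_eval G a nu * tl_eval G b nu.
Proof. by []. Qed.
Lemma ev_eq (G : graph R n l) x y nu : tl_eval G (TEq R l x y) nu = ((nu x == nu y) : nat)%:R.
Proof. by []. Qed.

Definition FT := graph R n l -> (nat -> 'I_n) -> R.

Definition Expr (D : nat) (f : FT) : Prop :=
  exists phi : tl R l, in_TL_k Omega k phi /\ (sdepth phi <= D)%N /\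
    forall G nu, tl_eval G phi nu = f G nu.

Lemma E_ext D f g : (forall G nu, f G nu = g G nu) -> Expr D f -> Expr D g.
Proof. move=> H [phi [H1 [H2 H3]]]; exists phi; split=> //; split=> // G nu; by rewrite H3 H. Qed.

Lemma E_mono D D' f : (D <= D')%N -> Expr D f -> Expr D' f.
Proof. move=> HD [phi [H1 [H2 H3]]]; exists phi; split=> //; split=> //; exact: leq_trans HD. Qed.

Lemma E_const a : Expr 0 (fun _ _ => a).
Proof.
exists (TScale a (TEq R l 0 0)); split; first by rewrite /=; split.
split => // G nu /=; by rewrite eqxx mulr1.
Qed.

Lemma E_add D f g : Expr D f -> Expr D g -> Expr D (fun G nu => f G nu + g G nu).
Proof.
move=> [p [H1 [H2 H3]]] [q [K1 [K2 K3]]]; exists (TAdd p q); split => //=.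
split; first by rewrite geq_max H2 K2. by move=> G nu; rewrite H3 K3.
Qed.

Lemma E_mul D f g : Expr D f -> Expr D g -> Expr D (fun G nu => f G nu * g G nu).
Proof.
move=> [p [H1 [H2 H3]]] [q [K1 [K2 K3]]]; exists (TMul p q); split => //=.
split; first by rewrite geq_max H2 K2. by move=> G nu; rewrite H3 K3.
Qed.

Lemma E_scale D a f : Expr D f -> Expr D (fun G nu => a * f G nu).
Proof. move=> [p [H1 [H2 H3]]]; exists (TScale a p); split => //=; split=> // G nu; by rewrite H3. Qed.

Lemma E_sumseq (I : Type) D (s : seq I) (P : pred I) (F : I -> FT) :
  (forall i, P i -> Expr D (F i)) -> Expr D (fun G nu => \sum_(i <- s | P i) F i G nu).
Proof.
move=> H; elim: s => [|x s IH].
  apply: E_ext (E_mono (leq0n D) (E_const 0)) => G nu; by rewrite big_nil.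
case Px: (P x).
  apply: E_ext (E_add (H x Px) IH) => G nu; by rewrite big_cons Px.
apply: E_ext IH => G nu; by rewrite big_cons Px.
Qed.

Lemma E_prodseq (I : Type) D (s : seq I) (P : pred I) (F : I -> FT) :
  (forall i, P i -> Expr D (F i)) -> Expr D (fun G nu => \prod_(i <- s | P i) F i G nu).
Proof.
move=> H; elim: s => [|x s IH].
  apply: E_ext (E_mono (leq0n D) (E_const 1)) => G nu; by rewrite big_nil.
case Px: (P x).
  apply: E_ext (E_mul (H x Px) IH) => G nu; by rewrite big_cons Px.
apply: E_ext IH => G nu; by rewrite big_cons Px.
Qed.

Lemma E_eqat (i j : 'I_k) (B : bool) :
  Expr 0 (fun G nu => ((B == (nu i == nu j)) : nat)%:R).
Proof.
case: B.
  exists (TEq R l i j); split => //=; split => // G nu; by rewrite eqxx.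
exists (TNeq R l i j); split => //=; split => // G nu; by case: (nu i == nu j).
Qed.

Lemma E_sigma D f (s : R -> R) :
  @Omega 1%N (fun x : 'I_1 -> R => s (x ord0)) -> Expr D f -> Expr D (fun G nu => s (f G nu)).
Proof.
move=> HO [p [H1 [H2 H3]]]; exists (TFun (fun x : 'I_1 -> R => s (x ord0)) (fun _ => p)).
split => //=; split; first by rewrite big_ord1.
by move=> G nu; rewrite H3.
Qed.

Lemma E_sumvar D f (r : nat) : (r < k)%N -> Expr D f ->
  Expr D.+1 (fun G nu => \sum_(y : 'I_n) f G (upd nu r y)).
Proof.
move=> Hr [p [H1 [H2 H3]]]; exists (TSum r p); split => //=; split => // G nu.
by apply: eq_bigr => y _; rewrite H3.
Qed.

Lemma sum_pred1 (T : finType) (a : T) (F : T -> R) :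
  \sum_(y : T) ((y == a) : nat)%:R * F y = F a.
Proof.
rewrite (bigD1 a) //= eqxx mul1r big1 ?addr0 // => y /negbTE ->; by rewrite mul0r.
Qed.

Lemma E_copy D f (r s : nat) : (r < k)%N -> (s < k)%N -> r != s -> Expr D f ->
  Expr D.+1 (fun G nu => f G (upd nu r (nu s))).
Proof.
move=> Hr Hs Hrs [p [H1 [H2 H3]]]; exists (TSum r (TMul (TEq R l r s) p)).
split; first by rewrite /=; do 2!split => //.
split; first by rewrite /= max0n.
move=> G nu; rewrite -[RHS](sum_pred1 (nu s) (fun y => f G (upd nu r y))).
rewrite ev_sum; apply: eq_bigr => y _; rewrite ev_mul ev_eq H3 /upd eqxx.
by rewrite [s == r]eq_sym (negbTE Hrs).
Qed.

End Dev.
Section Dev2.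
Variable R : realType.
Variables (n l k : nat).
Variable Omega : forall p : nat, (('I_p -> R) -> R) -> Prop.
Hypothesis Hk : (0 < k)%N.
Local Notation EX := (@Expr R n l k Omega).

Fixpoint rename (rho : nat -> nat) (e : tl R l) : tl R l :=
  match e with
  | TEq x y => TEq R l (rho x) (rho y)
  | TNeq x y => TNeq R l (rho x) (rho y)
  | TE x y => TE R l (rho x) (rho y)
  | TP s x => @TP R l s (rho x)
  | TMul a b => TMul (rename rho a) (rename rho b)
  | TAdd a b => TAdd (rename rho a) (rename rho b)
  | TScale c b => TScale c (rename rho b)
  | TFun p f args => TFun f (fun i => rename rho (args i))
  | TSum x b => TSum (rho x) (rename rho b)
  end.

Lemma ev_rename rho (Hrho : injective rho) e (G : graph R n l) nu :
  tl_eval G (rename rho e) nu = tl_eval G e (nu \o rho).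
Proof.
elim: e nu => //=.
- by move=> a IHa b IHb nu; rewrite IHa IHb.
- by move=> a IHa b IHb nu; rewrite IHa IHb.
- by move=> c b IHb nu; rewrite IHb.
- by move=> p f args IH nu; congr f; apply: functional_extensionality => i; rewrite IH.
- move=> x b IHb nu; apply: eq_bigr => w _; rewrite IHb; congr tl_eval.
  apply: functional_extensionality => y; by rewrite /upd /= (inj_eq Hrho).
Qed.

Lemma in_rename rho (Hrho : forall x, (x < k)%N -> (rho x < k)%N) e :
  in_TL_k Omega k e -> in_TL_k Omega k (rename rho e).
Proof.
elim: e => //=.
- move=> x y [H1 H2]; by split; apply: Hrho.
- move=> x y [H1 H2]; by split; apply: Hrho.
- move=> x y [H1 H2]; by split; apply: Hrho.
- by move=> a IHa b IHb [H1 H2]; split; [apply: IHa | apply: IHb].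
- by move=> a IHa b IHb [H1 H2]; split; [apply: IHa | apply: IHb].
- by move=> p f args IH [H1 [H2 H3]]; split => //; split => // i; apply: IH.
- by move=> x b IH [H1 H2]; split; [exact: Hrho | exact: IH].
Qed.

Lemma sdepth_rename rho e : sdepth (rename rho e) = sdepth e.
Proof.
elim: e => //=.
- by move=> a IHa b IHb; rewrite IHa IHb.
- by move=> a IHa b IHb; rewrite IHa IHb.
- by move=> p f args IH; apply: eq_bigr => i _; rewrite IH.
- by move=> x b ->.
Qed.

Definition swapn (i j x : nat) : nat := if x == i then j else if x == j then i else x.

Lemma swapnK i j : involutive (swapn i j).
Proof.
move=> x; rewrite /swapn.
case: (eqVneq x i) => [->|Hxi].
  rewrite eqxx; case: (eqVneq j i) => [->|Hji] //; by rewrite ?eqxx.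
case: (eqVneq x j) => [->|Hxj]; first by rewrite ?eqxx.
by rewrite (negbTE Hxi) (negbTE Hxj).
Qed.

Lemma E_swap D (f : FT R n l) (i j : nat) : (i < k)%N -> (j < k)%N -> EX D f ->
  EX D (fun G nu => f G (nu \o swapn i j)).
Proof.
move=> Hi Hj [p [H1 [H2 H3]]]; exists (rename (swapn i j) p); split.
  apply: in_rename => // x Hx; rewrite /swapn; by case: ifP => //; case: ifP.
split; first by rewrite sdepth_rename.
move=> G nu; rewrite ev_rename ?H3 //; exact: can_inj (swapnK i j).
Qed.

Definition tupof (nu : nat -> 'I_n) : {ffun 'I_k -> 'I_n} := [ffun i : 'I_k => nu i].
Definition ext (nu : nat -> 'I_n) (w : {ffun 'I_k -> 'I_n}) : nat -> 'I_n :=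
  fun x => match (insub x : option 'I_k) with Some i => w i | None => nu x end.

Lemma ext_ord nu w (i : 'I_k) : ext nu w i = w i.
Proof. by rewrite /ext valK. Qed.

Lemma ext_ge nu w x : (k <= x)%N -> ext nu w x = nu x.
Proof. by move=> Hx; rewrite /ext insubN // -leqNgt. Qed.

Lemma tupof_ext nu w : tupof (ext nu w) = w.
Proof. by apply/ffunP => i; rewrite ffunE ext_ord. Qed.

Lemma ext_tupof nu : ext nu (tupof nu) = nu.
Proof.
apply: functional_extensionality => x; rewrite /ext.
by case: insubP => // i _ <-; rewrite ffunE.
Qed.

End Dev2.
Section Dev3.
Variable R : realType.
Variables (n l k : nat).
Variable Omega : forall p : nat, (('I_p -> R) -> R) -> Prop.
Local Notation EX := (@Expr R n l k Omega).
Local Notation tup := {ffun 'I_k -> 'I_n}.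

Definition okf (a : 'I_k -> option 'I_k) (nu : nat -> 'I_n) (w : tup) (i : 'I_k) : bool :=
  if a i is Some j then w i == nu j else true.
Definition okall a nu w := [forall i, okf a nu w i].
Definition SS (a : 'I_k -> option 'I_k) (f : FT R n l) : FT R n l :=
  fun G nu => \sum_(w : tup) ((okall a nu w) : nat)%:R * f G (ext nu w).
Definition nf (a : 'I_k -> option 'I_k) : {set 'I_k} := [set i | a i != Some i].

Lemma SS_base a f G nu : (forall i, a i = Some i) -> SS a f G nu = f G nu.
Proof.
move=> Ha; rewrite /SS; transitivity (f G (ext nu (tupof k nu))); last by rewrite ext_tupof.
rewrite -(sum_pred1 (tupof k nu) (fun w => f G (ext nu w))).
apply: eq_bigr => w _; congr (_%:R * _); congr nat_of_bool.
apply/forallP/eqP => [H|->].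
  apply/ffunP => i; move: (H i); rewrite /okf Ha ffunE => /eqP //.
by move=> i; rewrite /okf Ha ffunE.
Qed.

Definition fixr (a : 'I_k -> option 'I_k) (r : 'I_k) : 'I_k -> option 'I_k :=
  fun i => if i == r then Some r else a i.

Lemma nf_fixr a r : r \in nf a -> #|nf (fixr a r)| = #|nf a|.-1.
Proof.
move=> Hr; rewrite (cardsD1 r (nf a)) Hr add1n /=; apply: eq_card => i.
rewrite !inE /fixr.
by case: (eqVneq i r) => [->|Hir] //=; rewrite eqxx.
Qed.

Lemma okf_fixr a r nu y w i : (forall i, i != r -> a i != Some r) -> i != r ->
  okf (fixr a r) (upd nu r y) w i = okf a nu w i.
Proof.
move=> Hread Hir; rewrite /okf /fixr (negbTE Hir).
case Hai: (a i) => [m|] //.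
have Hmr : (m : nat) != r.
  apply/negP => /eqP /val_inj Emr; move: (Hread i Hir); by rewrite Hai Emr eqxx.
by rewrite /upd (negbTE Hmr).
Qed.

Lemma SS_copy a f r j G nu : a r = Some j -> j != r ->
  (forall i, i != r -> a i != Some r) ->
  SS a f G nu = SS (fixr a r) f G (upd nu r (nu j)).
Proof.
move=> Har Hjr Hread; rewrite /SS; apply: eq_bigr => w _.
have -> : ext (upd nu r (nu j)) w = ext nu w.
  apply: functional_extensionality => x; case: (ltnP x k) => Hx.
    by rewrite -[x]/(val (Ordinal Hx)) !ext_ord.
  rewrite !ext_ge // /upd; case: eqP => // Exr.
  by move: (ltn_ord r); rewrite -Exr ltnNge Hx.
congr (_%:R * _); congr nat_of_bool; apply: eq_forallb => i; rewrite /okf /fixr.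
case: (eqVneq i r) => [->|Hir]; first by rewrite Har /upd eqxx.
case Hai: (a i) => [m|] //.
have Hmr : (m : nat) != r.
  apply/negP => /eqP /val_inj Emr; move: (Hread i Hir); by rewrite Hai Emr eqxx.
by rewrite /upd (negbTE Hmr).
Qed.

Lemma SS_sum a f r G nu : a r = None ->
  (forall i, i != r -> a i != Some r) ->
  SS a f G nu = \sum_(y : 'I_n) SS (fixr a r) f G (upd nu r y).
Proof.
move=> Har Hread; rewrite /SS exchange_big /=; apply: eq_bigr => w _.
have Hext : forall y, ext (upd nu r y) w = ext nu w.
  move=> y; apply: functional_extensionality => x; case: (ltnP x k) => Hx.
    by rewrite -[x]/(val (Ordinal Hx)) !ext_ord.
  rewrite !ext_ge // /upd; case: eqP => // Exr.
  by move: (ltn_ord r); rewrite -Exr ltnNge Hx.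
rewrite -[LHS](sum_pred1 (w r) (fun y => ((okall a nu w) : nat)%:R * f G (ext nu w))).
apply: eq_bigr => y _; rewrite Hext mulrA -natrM; congr (_%:R * _).
rewrite mulnb; congr nat_of_bool.
apply/andP/forallP => [[/eqP -> /forallP H] i|H].
  case: (eqVneq i r) => [->|Hir]; last by rewrite okf_fixr // H.
  by rewrite /okf /fixr eqxx /upd eqxx.
split; first by move: (H r); rewrite /okf /fixr eqxx /upd eqxx eq_sym.
apply/forallP => i; case: (eqVneq i r) => [->|Hir]; first by rewrite /okf Har.
by rewrite -(okf_fixr _ y _ Hread Hir) H.
Qed.

Definition oswap (i r o : 'I_k) : 'I_k := if o == i then r else if o == r then i else o.

Lemma val_oswap i r o : val (oswap i r o) = swapn i r o.
Proof. by rewrite /oswap /swapn !val_eqE; case: ifP => //; case: ifP. Qed.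

Lemma oswapK i r : involutive (oswap i r).
Proof. move=> o; apply: val_inj; by rewrite !val_oswap swapnK. Qed.

Lemma SS_swap a f i r G nu :
  SS a f G nu = SS (fun x => a (oswap i r x)) (fun G nu => f G (nu \o swapn i r)) G nu.
Proof.
rewrite /SS (reindex_inj (h := fun w : tup => [ffun x => w (oswap i r x)])) /=; last first.
  apply: (can_inj (g := fun w : tup => [ffun x => w (oswap i r x)])) => w.
  by apply/ffunP => x; rewrite !ffunE oswapK.
apply: eq_bigr => w _; congr (_%:R * _).
  congr nat_of_bool; apply/forallP/forallP => H x.
    by move: (H (oswap i r x)); rewrite /okf ffunE oswapK.
  by move: (H (oswap i r x)); rewrite /okf oswapK ffunE.
congr f; apply: functional_extensionality => x /=; case: (ltnP x k) => Hx.
  rewrite -[x]/(val (Ordinal Hx)) -val_oswap !ext_ord ffunE //.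
have Hs : swapn i r x = x.
  rewrite /swapn; case: eqP => [Exi|_]; first by move: (ltn_ord i); rewrite -Exi ltnNge Hx.
  case: eqP => [Exr|_] //; by move: (ltn_ord r); rewrite -Exr ltnNge Hx.
by rewrite Hs !ext_ge.
Qed.

Lemma nf_swap a i r : i != r -> a i = Some r -> r \in nf a ->
  (#|nf (fun x => a (oswap i r x))| < #|nf a|)%N.
Proof.
move=> Hir Hai Hr; apply: proper_card; apply/properP; split.
  apply/subsetP => x; rewrite !inE /oswap.
  case: (eqVneq x i) => [->|Hxi]; first by move=> _; rewrite Hai; apply/eqP => -[Eri]; move: Hir; rewrite Eri eqxx.
  by case: (eqVneq x r) => [->|Hxr] //; rewrite Hai eqxx.
have Hri : (r == i) = false by rewrite eq_sym (negbTE Hir).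
exists r => //; by rewrite inE negbK /oswap Hri eqxx Hai.
Qed.

Lemma core m : forall a D f, (#|nf a| <= m)%N -> EX D f -> EX (D + m) (SS a f).
Proof.
elim: m => [|m IH] a D f Hm Hf.
  have H0 : forall i, a i = Some i.
    have E0 : nf a = set0 by apply: cards0_eq; apply/eqP; rewrite -leqn0.
    move=> i; have : i \notin nf a by rewrite E0 inE.
    by rewrite inE negbK => /eqP.
  rewrite addn0; apply: E_ext Hf => G nu; by rewrite SS_base.
have [H0|/set0Pn [r0 Hr0]] := eqVneq (nf a) set0.
  have Ha : forall i, a i = Some i.
    move=> i; have : i \notin nf a by rewrite H0 inE.
    by rewrite inE negbK => /eqP.
  apply: E_mono (leq_addr _ _) _; apply: E_ext Hf => G nu.
  by rewrite SS_base.
case: (pickP [pred r | (a r != Some r) && [forall i, (i != r) ==> (a i != Some r)]]) =>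
    [r /andP [Hr /forallP Hrd]|Hnone].
  have Hread : forall i, i != r -> a i != Some r.
    by move=> i Hi; move: (Hrd i); rewrite Hi.
  have Hm' : (#|nf (fixr a r)| <= m)%N.
    by rewrite nf_fixr ?inE // -subn1 leq_subLR add1n.
  case Har: (a r) => [j|].
    have Hjr : (r : nat) != j.
      apply/negP => /eqP /val_inj Erj; by move: Hr; rewrite Har Erj eqxx.
    rewrite addnS; apply: E_ext (E_copy (ltn_ord r) (ltn_ord j) Hjr (IH _ _ _ Hm' Hf)) => G nu.
    rewrite (SS_copy f G nu Har) //; apply/negP => /eqP Ejr; by rewrite Ejr eqxx in Hjr.
  rewrite addnS; apply: E_ext (E_sumvar (ltn_ord r) (IH _ _ _ Hm' Hf)) => G nu.
  by rewrite (SS_sum f G nu Har).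
have Hr0' := Hr0; rewrite inE in Hr0'.
have := Hnone r0; rewrite /= Hr0' /= => /negbT /forallPn [i].
rewrite negb_imply => /andP [Hir /negPn /eqP Hai].
have Hlt := nf_swap Hir Hai Hr0.
have Hm2 : (#|nf (fun x => a (oswap i r0 x))| <= m)%N by rewrite -ltnS (leq_trans Hlt Hm).
apply: E_mono (leq_add (leqnn D) (leqnSn m)) _.
apply: E_ext (IH _ _ _ Hm2 (E_swap (ltn_ord i) (ltn_ord r0) Hf)) => G nu.
by rewrite (SS_swap a f i r0).
Qed.

End Dev3.
Section Dev4.
Variable R : realType.
Variables (n l k : nat).
Variable Omega : forall p : nat, (('I_p -> R) -> R) -> Prop.
Hypothesis Hk : (0 < k)%N.
Local Notation EX := (@Expr R n l k Omega).
Local Notation tup := {ffun 'I_k -> 'I_n}.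

Lemma natr_forall (T : finType) (P : pred T) :
  (([forall i, P i]) : nat)%:R = \prod_i ((P i) : nat)%:R :> R.
Proof.
case: (boolP [forall i, P i]) => [/forallP H | /forallPn [i Hi]].
  by rewrite big1 // => i _; rewrite H.
by rewrite (bigD1 i) //= (negbTE Hi) mul0r.
Qed.

Definition cf (o : option bool) (x : bool) : R :=
  match o with None => 1 | Some b => ((b == x) : nat)%:R end.

Definition Mix (bb : 'I_k * 'I_k -> option bool) (nu : nat -> 'I_n) (w : tup) : R :=
  \prod_(p : 'I_k * 'I_k) cf (bb p) (nu p.1 == w p.2).

Definition XX bb (f : FT R n l) : FT R n l :=
  fun G nu => \sum_(w : tup) Mix bb nu w * f G (ext nu w).

Definition cnt (bb : 'I_k * 'I_k -> option bool) (o : option bool) : {set 'I_k * 'I_k} :=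
  [set p | bb p == o].

Definition setbb (bb : 'I_k * 'I_k -> option bool) p0 o :=
  fun p => if p == p0 then o else bb p.

Lemma Mix_D1 bb p0 nu w :
  Mix bb nu w = cf (bb p0) (nu p0.1 == w p0.2) *
    \prod_(p | p != p0) cf (bb p) (nu p.1 == w p.2).
Proof. by rewrite /Mix (bigD1 p0). Qed.

Lemma Mix_set bb p0 o nu w :
  Mix (setbb bb p0 o) nu w = cf o (nu p0.1 == w p0.2) *
    \prod_(p | p != p0) cf (bb p) (nu p.1 == w p.2).
Proof.
rewrite (Mix_D1 _ p0) /setbb eqxx; congr (_ * _).
by apply: eq_bigr => p /negbTE ->.
Qed.

Lemma cnt_set bb p0 o o' : bb p0 = o' -> o' != o -> cnt (setbb bb p0 o') o = cnt bb o.
Proof.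
move=> H1 H2; apply/setP => p; rewrite !inE /setbb.
by case: (eqVneq p p0) => [->|] //; rewrite H1 (negbTE H2).
Qed.

Lemma cnt_set2 bb p0 o o' : bb p0 = o -> o' != o ->
  #|cnt (setbb bb p0 o') o| = #|cnt bb o|.-1.
Proof.
move=> H1 H2; rewrite (cardsD1 p0 (cnt bb o)) inE H1 eqxx add1n /=.
apply: eq_card => p; rewrite !inE /setbb.
by case: (eqVneq p p0) => [->|] //=; rewrite (negbTE H2).
Qed.

Lemma Lpos_base bb D f :
  (forall p, bb p != Some false) ->
  (forall i j j', bb (j, i) = Some true -> bb (j', i) = Some true -> j = j') ->
  EX D f -> EX (D + k) (XX bb f).
Proof.
move=> Hnf Hnd Hf.
pose a := fun i => [pick j | bb (j, i) == Some true].
have HM : forall nu w, Mix bb nu w = ((okall a nu w) : nat)%:R.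
  move=> nu w; rewrite natr_forall.
  have -> : Mix bb nu w = \prod_j \prod_i cf (bb (j, i)) (nu j == w i).
    by rewrite pair_big; apply: eq_bigr => -[j i].
  rewrite exchange_big; apply: eq_bigr => i _; rewrite /okf /a.
  case: pickP => [j0 Hj0|Hnone].
    rewrite (bigD1 j0) //= (eqP Hj0) big1 ?mulr1 => [|j Hj]; first by rewrite eq_sym.
    move: (Hnf (j, i)); case Hb: (bb (j, i)) => [[]|] //= _.
    by move: Hj; rewrite (Hnd _ _ _ Hb (eqP Hj0)) eqxx.
  rewrite big1 // => j _; move: (Hnf (j, i)) (Hnone j); case: (bb (j, i)) => [[]|] //=.
apply: E_ext (core (leq_trans (max_card _) (eq_leq (card_ord k))) Hf) => G nu.
by rewrite /SS /XX; apply: eq_bigr => w _; rewrite HM.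
Qed.

Lemma Lpos m : forall bb D f, (forall p, bb p != Some false) ->
  (#|cnt bb (Some true)| <= m)%N -> EX D f -> EX (D + k) (XX bb f).
Proof.
elim: m => [|m IH] bb D f Hnf Hm Hf.
  apply: Lpos_base => // i j j' Hj.
  have E0 : cnt bb (Some true) = set0 by apply: cards0_eq; apply/eqP; rewrite -leqn0.
  have : (j, i) \in cnt bb (Some true) by rewrite inE Hj.
  by rewrite E0 inE.
case: (boolP [exists i, exists j, exists j', (j != j') && (bb (j,i) == Some true) && (bb (j',i) == Some true)]).
  move=> /existsP [i /existsP [j /existsP [j' /andP [/andP [Hjj' /eqP Hj] /eqP Hj']]]].
  pose bb' := setbb bb (j', i) None.
  have HX : forall G nu, ((true == (nu (val j) == nu (val j'))) : nat)%:R * XX bb' f G nu = XX bb f G nu.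
    move=> G nu; rewrite /XX mulr_sumr; apply: eq_bigr => w _; rewrite mulrA; congr (_ * _).
    rewrite (Mix_D1 bb (j', i)) Mix_set Hj' /= mul1r.
    have Hne : (j, i) != (j', i) by rewrite xpair_eqE negb_and Hjj'.
    rewrite (bigD1 (j, i)) //= Hj /=.
    case E: (nu j == w i).
      by rewrite (eqP E) [w i == _]eq_sym.
    rewrite /= !mul0r mulr0; case E': (nu j' == w i) => /=; by rewrite ?mul1r ?mulr0 ?mul0r.
  have Hnf' : forall p, bb' p != Some false by move=> p; rewrite /bb' /setbb; case: ifP.
  have Hm' : (#|cnt bb' (Some true)| <= m)%N by rewrite cnt_set2 // -subn1 leq_subLR add1n.
  have HE := E_mul (E_mono (leq0n (D + k)) (E_eqat n l Omega j j' true)) (IH bb' D f Hnf' Hm' Hf).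
  apply: (E_ext _ HE) => G nu; exact: HX.
move=> Hno; apply: Lpos_base => // i j j' Hj Hj'; apply/eqP.
apply: contraNT Hno => Hjj'; apply/existsP; exists i; apply/existsP; exists j; apply/existsP; exists j'.
by rewrite Hjj' Hj Hj' eqxx.
Qed.

Lemma Lneg m : forall bb D f, (#|cnt bb (Some false)| <= m)%N -> EX D f -> EX (D + k) (XX bb f).
Proof.
elim: m => [|m IH] bb D f Hm Hf.
  apply: (@Lpos #|cnt bb (Some true)|) => // p.
  have E0 : cnt bb (Some false) = set0 by apply: cards0_eq; apply/eqP; rewrite -leqn0.
  have : p \notin cnt bb (Some false) by rewrite E0 inE.
  by rewrite inE.
case: (pickP (fun p => bb p == Some false)) => [p0 /eqP Hp0 | Hnone]; last first.
  apply: (@Lpos #|cnt bb (Some true)|) => // p; by rewrite Hnone.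
have HX : forall G nu, XX (setbb bb p0 None) f G nu + (-1) * XX (setbb bb p0 (Some true)) f G nu
   = XX bb f G nu.
  move=> G nu; rewrite mulN1r /XX -sumrB; apply: eq_bigr => w _; rewrite -mulrBl; congr (_ * _).
  by rewrite (Mix_D1 bb p0) !Mix_set Hp0 -mulrBl /=; congr (_ * _); case: (nu _ == _) => /=; by rewrite ?subrr ?subr0.
have H1 : (#|cnt (setbb bb p0 None) (Some false)| <= m)%N by rewrite cnt_set2 // -subn1 leq_subLR add1n.
have H2 : (#|cnt (setbb bb p0 (Some true)) (Some false)| <= m)%N by rewrite cnt_set2 // -subn1 leq_subLR add1n.
have HE := E_add (IH _ _ _ H1 Hf) (E_scale (-1) (IH _ _ _ H2 Hf)).
apply: (E_ext _ HE) => G nu; exact: HX.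
Qed.

End Dev4.
Section Dev5.
Variable R : realType.
Variables (n l k : nat).
Variable Omega : forall p : nat, (('I_p -> R) -> R) -> Prop.
Hypothesis Hk : (0 < k)%N.
Local Notation EX := (@Expr R n l k Omega).
Local Notation tup := {ffun 'I_k -> 'I_n}.

Lemma catvL (v w : tup) j : catv v w (lshift k j) = v j.
Proof. by rewrite /catv ffunE -[lshift k j]/(@unsplit k k (inl j)) unsplitK. Qed.
Lemma catvR (v w : tup) i : catv v w (rshift k i) = w i.
Proof. by rewrite /catv ffunE -[rshift k i]/(@unsplit k k (inr i)) unsplitK. Qed.

Definition vvb (a : {ffun 'I_(k + k) -> 'I_n}) (nu : nat -> 'I_n) :=
  [forall j, forall j', ((a (lshift k j) == a (lshift k j')) == (nu j == nu j'))].
Definition wwb (a : {ffun 'I_(k + k) -> 'I_n}) (nu : nat -> 'I_n) :=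
  [forall i, forall i', ((a (rshift k i) == a (rshift k i')) == (nu i == nu i'))].
Definition mxb (a : {ffun 'I_(k + k) -> 'I_n}) (nu : nat -> 'I_n) (w : tup) :=
  [forall p : 'I_k * 'I_k, (a (lshift k p.1) == a (rshift k p.2)) == (nu p.1 == w p.2)].

Lemma simm_split a nu w :
  simm a (catv (tupof k nu) w) = [&& vvb a nu, mxb a nu w & wwb a (ext nu w)].
Proof.
apply/forallP/and3P => [H|[/forallP H1 /forallP H2 /forallP H3] p].
  split.
  - apply/forallP => j; apply/forallP => j'.
    by move: (H (lshift k j)) => /forallP /(_ (lshift k j')); rewrite !catvL !ffunE.
  - apply/forallP => -[j i] /=.
    by move: (H (lshift k j)) => /forallP /(_ (rshift k i)); rewrite catvL catvR ffunE.
  - apply/forallP => i; apply/forallP => i'.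
    by move: (H (rshift k i)) => /forallP /(_ (rshift k i')); rewrite !catvR !ext_ord.
apply/forallP => q; rewrite -(splitK p) -(splitK q).
case: (split p) => [j|i]; case: (split q) => [j'|i'] /=; rewrite ?catvL ?catvR ?ffunE.
- by move: (H1 j) => /forallP /(_ j').
- exact: (H2 (j, i')).
- by move: (H2 (j', i)); rewrite /= [a (rshift _ _) == _]eq_sym [w i == _]eq_sym.
- by move: (H3 i) => /forallP /(_ i'); rewrite !ext_ord.
Qed.

Definition bbA (a : {ffun 'I_(k + k) -> 'I_n}) (p : 'I_k * 'I_k) : option bool :=
  Some (a (lshift k p.1) == a (rshift k p.2)).

Lemma Mix_bbA a nu w : Mix R (bbA a) nu w = ((mxb a nu w) : nat)%:R.
Proof. by rewrite /mxb natr_forall. Qed.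

Lemma E_vvb D a : EX D (fun G nu => ((vvb a nu) : nat)%:R).
Proof.
apply: E_mono (leq0n D) _.
apply: (E_ext (f := fun G nu => \prod_j \prod_j' (((a (lshift k j) == a (lshift k j')) == (nu j == nu j')) : nat)%:R)).
  by move=> G nu; rewrite /vvb natr_forall; apply: eq_bigr => j _; rewrite natr_forall.
apply: (E_prodseq Hk) => j _; apply: (E_prodseq Hk) => j' _; exact: E_eqat.
Qed.

Lemma E_wwb D a : EX D (fun G nu => ((wwb a nu) : nat)%:R).
Proof.
apply: E_mono (leq0n D) _.
apply: (E_ext (f := fun G nu => \prod_i \prod_i' (((a (rshift k i) == a (rshift k i')) == (nu i == nu i')) : nat)%:R)).
  by move=> G nu; rewrite /wwb natr_forall; apply: eq_bigr => j _; rewrite natr_forall.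
apply: (E_prodseq Hk) => j _; apply: (E_prodseq Hk) => j' _; exact: E_eqat.
Qed.

Lemma Lcross D a f : EX D f ->
  EX (D + k) (fun G nu => \sum_(w : tup)
     ((catv (tupof k nu) w \in [set b | simm a b]) : nat)%:R * f G (ext nu w)).
Proof.
move=> Hf.
have Hf' : EX D (fun G nu => ((wwb a nu) : nat)%:R * f G nu) by apply: E_mul (E_wwb D a) Hf.
have HX := Lneg (leqnn #|cnt (bbA a) (Some false)|) Hf'.
have HE := E_mul (E_vvb (D + k) a) HX.
apply: (E_ext _ HE) => G nu; rewrite /XX mulr_sumr; apply: eq_bigr => w _.
rewrite inE simm_split Mix_bbA !mulrA -!natrM !mulnb.
by rewrite andbA.
Qed.

End Dev5.
Section Dev6.
Variable R : realType.
Variables (n l k : nat).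
Variable Omega : forall p : nat, (('I_p -> R) -> R) -> Prop.
Hypothesis Hk : (0 < k)%N.
Local Notation EX := (@Expr R n l k Omega).

Definition atp_tl : seq (tl R l) :=
  flatten [seq [:: TEq R l p.1 p.2; TE R l p.1 p.2] | p : 'I_k * 'I_k <-
     [seq q : 'I_k * 'I_k <- [seq (i, j) | i <- enum 'I_k, j <- enum 'I_k] | (q.1 < q.2)%N]]
  ++ flatten [seq [seq @TP R l s i | s : 'I_l <- enum 'I_l] | i : 'I_k <- enum 'I_k].

Lemma map_atp (G : graph R n l) nu :
  map (fun e => tl_eval G e nu) atp_tl = atp_seq G (tupof k nu).
Proof.
rewrite /atp_tl /atp_seq map_cat !map_flatten -!map_comp.
congr (flatten _ ++ flatten _); apply: eq_map => p /=; first by rewrite !ffunE.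
rewrite -map_comp; apply: eq_map => s /=; by rewrite ffunE.
Qed.

Lemma nth_map_gen (T1 T2 : Type) (f : T1 -> T2) x0 s i :
  nth (f x0) (map f s) i = f (nth x0 s i).
Proof. by elim: s i => [|x s IH] [|i] //=. Qed.

Fixpoint allp (T : Type) (P : T -> Prop) (s : seq T) : Prop :=
  match s with [::] => True | x :: s => P x /\ allp P s end.

Lemma allp_cat (T : Type) (P : T -> Prop) s1 s2 : allp P s1 -> allp P s2 -> allp P (s1 ++ s2).
Proof. by elim: s1 => //= x s IH [H1 H2] H; split => //; apply: IH. Qed.

Lemma allp_flatten (T : Type) (P : T -> Prop) ss : allp (allp P) ss -> allp P (flatten ss).
Proof. by elim: ss => //= s ss IH [H1 H2]; apply: allp_cat => //; apply: IH. Qed.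

Lemma allp_map (T1 T2 : Type) (P : T2 -> Prop) (f : T1 -> T2) s :
  (forall x, P (f x)) -> allp P (map f s).
Proof. by move=> H; elim: s => //= x s IH; split. Qed.

Lemma allp_nth (T : Type) (P : T -> Prop) s x0 i : allp P s -> P x0 -> P (nth x0 s i).
Proof.
elim: s i => [|x s IH] i /=; first by move=> _ H; case: i.
by move=> [H1 H2] H0; case: i => [|i] //=; apply: IH.
Qed.

Lemma E_atp (i : 'I_(d0 k l)) : EX 0 (fun G nu => atp G (tupof k nu) i).
Proof.
pose dflt := TScale 0 (TEq R l 0 0).
pose good := fun e : tl R l => in_TL_k Omega k e /\ sdepth e = 0%N.
have [H1 H2] : good (nth dflt atp_tl i).
  apply: allp_nth; last by split => //; split.
  apply: allp_cat; apply: allp_flatten; apply: allp_map => x /=.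
    by split; [split => //; split; exact: ltn_ord | split => //; split => //; split; exact: ltn_ord].
  by apply: allp_map => s; split => //; exact: ltn_ord.
exists (nth dflt atp_tl i); split => //; split; first by rewrite H2.
move=> G nu; rewrite /atp -map_atp.
have -> : (0 : R) = tl_eval G dflt nu by rewrite /= mul0r.
exact: (esym (nth_map_gen (fun e => tl_eval G e nu) dflt atp_tl i)).
Qed.

End Dev6.
Lemma E_simm (R : realType) (n l k : nat) (Omega : forall p : nat, (('I_p -> R) -> R) -> Prop)
  (Hk : (0 < k)%N) (a : {ffun 'I_k -> 'I_n}) :
  Expr k Omega 0 (fun (G : graph R n l) nu => ((tupof k nu \in [set b | simm a b]) : nat)%:R).
Proof.
apply: (E_ext (f := fun G nu => \prod_i \prod_j (((a i == a j) == (nu i == nu j)) : nat)%:R)).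
  move=> G nu; rewrite inE /simm natr_forall; apply: eq_bigr => i _; rewrite natr_forall.
  by apply: eq_bigr => j _; rewrite !ffunE.
apply: (E_prodseq Hk) => i _; apply: (E_prodseq Hk) => j _; exact: E_eqat.
Qed.

Unset Implicit Arguments.
Set Strict Implicit.

Theorem mainTheorem8 (R : realType) (n l k t : nat)
    (Omega : forall p : nat, (('I_p -> R) -> R) -> Prop)
    (d : nat -> nat)
    (c : forall r : nat,
        {set {ffun 'I_(k + k) -> 'I_n}} -> 'I_(dimf k l d r.-1) -> 'I_(dimf k l d r) -> R)
    (b : forall r : nat, {set {ffun 'I_k -> 'I_n}} -> 'I_(dimf k l d r) -> R)
    (sigma : nat -> R -> R) :
  (0 < n)%N -> (2 <= k)%N ->
  (forall r : nat, (1 <= r <= t)%N -> Omega 1%N (fun x : 'I_1 -> R => sigma r (x ord0))) ->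
  forall j : 'I_(dimf k l d t),
  exists phi : tl R l,
    TL Omega k (t * k) phi /\
    forall (G : graph R n l) (v : {ffun 'I_k -> 'I_n}) (nu : nat -> 'I_n),
      (forall i : 'I_k, nu i = v i) ->
      tl_eval G phi nu = ign_F c b sigma G t v j.
Proof.
move=> Hn Hk2 Hsig.
have Hk : (0 < k)%N by apply: ltnW.
suff Main : forall r, (r <= t)%N -> forall j : 'I_(dimf k l d r),
    Expr k Omega (r * k) (fun G nu => ign_F c b sigma G r (tupof k nu) j).
  move=> j; have [phi [H1 [H2 H3]]] := Main t (leqnn t) j.
  exists phi; split; first by split.
  move=> G v nu Hv; rewrite H3; congr ign_F; apply/ffunP => i; by rewrite ffunE Hv.
elim=> [|r IH] Hr j.
  exact: E_atp.
have IHi := IH (ltnW Hr).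
have HS1 : Expr k Omega (r * k + k) (fun G nu =>
   \sum_(gam in eq_classes n (k + k)) \sum_(i < dimf k l d r) \sum_(w : {ffun 'I_k -> 'I_n})
      ((catv (tupof k nu) w \in gam) : nat)%:R *
        (c r.+1 gam i j * ign_F c b sigma G r (tupof k (ext nu w)) i)).
  apply: (E_sumseq Hk) => gam /imsetP [a _ ->]; apply: (E_sumseq Hk) => i _.
  exact: (Lcross Hk a (E_scale (c r.+1 [set b0 | simm a b0] i j) (IHi i))).
have HS2 : Expr k Omega (r * k + k) (fun (G : graph R n l) nu =>
   \sum_(mu in eq_classes n k) b r.+1 mu j * ((tupof k nu \in mu) : nat)%:R).
  apply: (E_mono (leq0n (r * k + k))).
  apply: (E_sumseq Hk) => mu /imsetP [a _ ->]; apply: E_scale; exact: E_simm.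
have HE := E_sigma (Hsig r.+1 Hr) (E_add HS1 HS2).
rewrite mulSn addnC; apply: (E_ext _ HE) => G nu /=.
congr (sigma _ (_ + _)).
  apply: eq_bigr => gam _; rewrite exchange_big /=; apply: eq_bigr => w _.
  by rewrite mulr_sumr tupof_ext.
by apply: eq_bigr => mu _; rewrite mulrC.
Qed.
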